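(* Let $\mathcal{F}$ be a construction scheme over $\omega_1$ of a good type, let $\mathcal{A}_\mathcal{F}=\langle A_\alpha\rangle_{\alpha<\omega_1}$ be the AD family over $N$ defined below, and let $(X,\leq)$ be an $\omega_1$-like partial order. Then there are a bijection $\psi:X\to\omega_1$ and infinite sets $T_x\subseteq N$ ($x\in X$) such that $(\langle T_x\rangle_{x\in X},\langle A_{\psi(x)}\rangle_{x\in X})$ is an almost disjoint representation of $X$. In particular $\mathcal{A}_\mathcal{F}$ codes every $\omega_1$-like partial order.
   Context: A type is a sequence $\langle m_k,n_{k+1},r_{k+1}\rangle_{k\in\omega}$ of natural numbers with $m_0=1$ and, for all $k$, $n_{k+1}\geq2$, $m_k>r_{k+1}$, $m_{k+1}=r_{k+1}+(m_k-r_{k+1})n_{k+1}$; good if each $r\in\omega$ equals $r_k$ for infinitely many $k\geq1$. A construction scheme of type $\tau$ over a set of ordinals $Y$ is a family $\mathcal{F}$ of nonempty finite subsets of $Y$, cofinal among finite subsets of $Y$ under $\subseteq$, each of size $m_k$ for some $k$, such that with $\mathcal{F}_k=\{F\in\mathcal{F}:|F|=m_k\}$: (i) for $E,F\in\mathcal{F}_k$, $E\cap F$ is an initial segment of both; (ii) every $F\in\mathcal{F}_{k+1}$ equals $F_0\cup\dots\cup F_{n_{k+1}-1}$ with $F_i\in\mathcal{F}_k$ a $\Delta$-system with root $R(F)$, $|R(F)|=r_{k+1}$, $R(F)<F_0\setminus R(F)<\dots<F_{n_{k+1}-1}\setminus R(F)$ ($A<B$: every element of $A$ below every element of $B$). $\rho(\alpha,\beta)=\min\{k:\exists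 F\in\mathcal{F}_k\ \{\alpha,\beta\}\subseteq F\}$; $\lVert\alpha\rVert_k=|\{\xi<\alpha:\rho(\xi,\alpha)\leq k\}|$; for $k\geq1$, $\Xi_\alpha(k)=-1$ if $\alpha\in R(F)$ and $=i$ if $\alpha\in F_i\setminus R(F)$ for any $F\in\mathcal{F}_k$ containing $\alpha$. The family $\mathcal{A}_\mathcal{F}$: for $k\geq1$, $N_k=\{(\sigma,k):\sigma:n_k\to m_{k-1}\}$, $N=\bigcup_{k\geq1}N_k$, $A^k_\alpha=\{(\sigma,k)\in N_k:\Xi_\alpha(k)\geq0,\ \sigma(\Xi_\alpha(k))=\lVert\alpha\rVert_{k-1}\}$, $A_\alpha=\bigcup_{k\geq1}A^k_\alpha$. $A\subseteq^*B$ means $A\setminus B$ finite; $A=^*B$ means both inclusions mod finite. A partial order is $\omega_1$-like if well-founded, of size $\omega_1$, with every $(-\infty,x)$ countable. $\inf(x,y)$ is the greatest lower bound when it exists; $x,y$ incompatible means no $z\leq x,y$; $\mathrm{pred}(x)$ is the set of maximal elements of $(-\infty,x)$ and $x$ is successor-like if $\mathrm{pred}(x)$ is finite and every $y<x$ is $\leq$ some $z\in\mathrm{pred}(x)$. An almost disjoint representation of $X$ is a pair of indexed families $\langle T_x\rangle_{x\in X},\langle A_x\rangle_{x\in X}$ of infinite subsets of a countable set, $x\mapsto A_x$ injective and $\{A_x\}$ almost disjoint, such that: (a) $A_x\subseteq T_x$; (b) $y\not\leq x\Rightarrow A_y\subseteq^*T_y\setminus T_x$; (c) if $\inf(x,y)$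 exists, $T_x\cap T_y=^*T_{\inf(x,y)}$; (d) $x$ successor-like $\Rightarrow T_x\setminus\bigcup_{z\in\mathrm{pred}(x)}T_z=^*A_x$; (e) $x,y$ incompatible $\Rightarrow T_x\cap T_y=^*\emptyset$. *)

(* Defs.v *)
From HB Require Import structures.
From mathcomp Require Import all_boot.
From mathcomp Require Import boolp classical_sets cardinality.

Set Implicit Arguments.
Unset Strict Implicit.
Unset Printing Implicit Defensive.

Local Open Scope classical_set_scope.
Local Open Scope card_scope.

(* omega_1, presented as an abstract strict well-order (W, lt) which   *)
(* is uncountable and all of whose proper initial segments are         *)
(* countable; such an order is exactly (isomorphic to) omega_1.        *)
Definition omega1_order (W : Type) (lt : W -> W -> Prop) : Prop :=
  [/\ (forall a, ~ lt a a),
      (forall a b c, lt a b -> lt b c -> lt a c),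
      (forall a b, lt a b \/ a = b \/ lt b a) &
      well_founded lt] /\
  (forall a, countable [set x | lt x a]) /\
  ~ countable [set: W].

Definition has_size (T : Type) (A : set T) (c : nat) : Prop := A #= `I_c.

Definition setlt (W : Type) (lt : W -> W -> Prop) (A B : set W) : Prop :=
  forall a b, A a -> B b -> lt a b.

(* Types  <m_k, n_{k+1}, r_{k+1}>_k   (n 0 and r 0 are irrelevant).    *)
Definition is_type (m n r : nat -> nat) : Prop :=
  m 0 = 1 /\
  forall k, [/\ 2 <= n k.+1, r k.+1 < m k &
                m k.+1 = r k.+1 + (m k - r k.+1) * n k.+1].

Definition good_type (m n r : nat -> nat) : Prop :=
  is_type m n r /\
  forall r0 K, exists k, [/\ K <= k, 1 <= k & r k = r0].

Section Scheme.
Variables (W : Type) (lt : W -> W -> Prop) (m n r : nat -> nat)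
          (Fam : set (set W)).

Definition Fk (k : nat) (F : set W) : Prop := Fam F /\ has_size F (m k).

Definition init_seg (A B : set W) : Prop :=
  A `<=` B /\ forall x y, A x -> B y -> lt y x -> A y.

Definition decomposition (k : nat) (F : set W) (Fs : nat -> set W)
  (R : set W) : Prop :=
  [/\ (forall i, i < n k.+1 -> Fk k (Fs i)),
      F = \bigcup_(i in `I_(n k.+1)) Fs i,
      (forall i j, i < n k.+1 -> j < n k.+1 -> i <> j -> Fs i `&` Fs j = R),
      has_size R (r k.+1) &
      (0 < n k.+1 -> setlt lt R (Fs 0 `\` R))] /\
  (forall i, i.+1 < n k.+1 -> setlt lt (Fs i `\` R) (Fs i.+1 `\` R)).

Definition construction_scheme : Prop :=
  [/\ (forall F, Fam F -> F !=set0 /\ exists k, has_size F (m k)),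
      (forall A, finite_set A -> exists F, Fam F /\ A `<=` F),
      (forall k E F, Fk k E -> Fk k F ->
          init_seg (E `&` F) E /\ init_seg (E `&` F) F) &
      (forall k F, Fk k.+1 F -> exists Fs R, decomposition k F Fs R) ].

Definition rho_le (a b : W) (k : nat) : Prop :=
  exists j, j <= k /\ exists F, Fk j F /\ F a /\ F b.

Definition norm_is (a : W) (k c : nat) : Prop :=
  has_size [set x | lt x a /\ rho_le x a k] c.

(* Xi_a(k+1) = i  with  i >= 0 , i.e. a in F_i \ R(F) for F in F_{k+1} *)
Definition Xi_is (a : W) (k i : nat) : Prop :=
  exists F Fs R, [/\ Fk k.+1 F, F a, decomposition k F Fs R &
                     i < n k.+1] /\ Fs i a /\ ~ R a.

(* The countable set N = U_{k>=1} N_k, with (sigma, j.+1) in N_{j+1},  *)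
(* sigma : n_{j+1} -> m_j.                                              *)
Definition Nset := {j : nat & {ffun 'I_(n j.+1) -> 'I_(m j)}}.

Definition A_F (a : W) : set Nset :=
  [set p : Nset | let: existT j sigma := p in
           exists i (Hi : i < n j.+1),
             Xi_is a j i /\ norm_is a j (nat_of_ord (sigma (Ordinal Hi)))].

End Scheme.

Section PO.
Variables (X : Type) (le : X -> X -> Prop).

Definition partial_order : Prop :=
  [/\ (forall x, le x x),
      (forall x y, le x y -> le y x -> x = y) &
      (forall x y z, le x y -> le y z -> le x z)].

Definition ltX (x y : X) : Prop := le x y /\ x <> y.

Definition omega1_like (W : Type) : Prop :=
  [/\ partial_order,
      well_founded ltX,
      (exists f : X -> W, bijective f) &
      (forall x, countable [set y | ltX y x])].

Definition is_inf (x y z : X) : Prop :=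
  [/\ le z x, le z y & forall w, le w x -> le w y -> le w z].

Definition incompatible (x y : X) : Prop := ~ exists z, le z x /\ le z y.

Definition predX (x : X) : set X :=
  [set z | ltX z x /\ ~ exists w, ltX z w /\ ltX w x].

Definition successor_like (x : X) : Prop :=
  finite_set (predX x) /\
  forall y, ltX y x -> exists2 z, predX x z & le y z.

Definition subAE (T : Type) (A B : set T) : Prop := finite_set (A `\` B).
Definition eqAE (T : Type) (A B : set T) : Prop := subAE A B /\ subAE B A.

Definition ad_representation (N : Type) (T A : X -> set N) : Prop :=
  [/\ (forall x, infinite_set (T x) /\ infinite_set (A x)),
      (forall x y, A x = A y -> x = y),
      (forall x y, x <> y -> finite_set (A x `&` A y)) &
      (forall x, A x `<=` T x)] /\
  [/\ (forall x y, ~ le y x -> subAE (A y) (T y `\` T x)),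
      (forall x y z, is_inf x y z -> eqAE (T x `&` T y) (T z)),
      (forall x, successor_like x ->
          eqAE (T x `\` \bigcup_(z in predX x) T z) (A x)) &
      (forall x y, incompatible x y -> eqAE (T x `&` T y) set0) ].

End PO.

(* Main.v *)
Require Import Defs.
From HB Require Import structures.
From mathcomp Require Import all_boot finmap zify.
From mathcomp Require Import boolp classical_sets cardinality.
Set Implicit Arguments. Unset Strict Implicit. Unset Printing Implicit Defensive.
Local Open Scope classical_set_scope.
Local Open Scope card_scope.

Definition cnt {T : Type} (A : set T) : nat := #|` fset_set (A : set {classic T})|%fset.

Lemma has_sizeP T (A : set T) c : has_size A c <-> finite_set A /\ cnt A = c.
Proof.
split.
  move=> h; split; first by exists c.
  exact: (@card_fset_set {classic T} A c h).
move=> [fA <-]; rewrite /has_size.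
rewrite -[X in X #= _](@fset_setK {classic T} A) //.
exact: (introT (@card_eq_fsetP {classic T} _ _) erefl).
Qed.

Lemma cnt_sub T (A B : set T) : finite_set B -> A `<=` B -> cnt A <= cnt B.
Proof.
move=> fB AB; have fA : finite_set A by apply: sub_finite_set fB.
rewrite /cnt; apply: fsubset_leq_card.
by rewrite -(@fset_set_sub {classic T}).
Qed.

Lemma cnt_UI T (A B : set T) : finite_set A -> finite_set B ->
  cnt (A `|` B) + cnt (A `&` B) = cnt A + cnt B.
Proof.
move=> fA fB; rewrite /cnt (@fset_setU {classic T}) // (@fset_setI {classic T}) //.
exact: cardfsUI.
Qed.

Lemma cnt1 T (x : T) : cnt [set x] = 1.
Proof. by rewrite /cnt (@fset_set1 {classic T}) cardfs1. Qed.

Lemma cnt0 T : cnt (@set0 T) = 0.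
Proof. by rewrite /cnt (@fset_set0 {classic T}) cardfs0. Qed.

Lemma cnt_eq0 T (A : set T) : finite_set A -> cnt A = 0 -> A = set0.
Proof.
move=> fA /cardfs0_eq h. exact: (@fset_set_set0 {classic T}).
Qed.

Lemma cnt_proper T (A B : set T) x : finite_set B -> A `<=` B -> B x -> ~ A x ->
  cnt A < cnt B.
Proof.
move=> fB AB Bx nAx; have fA : finite_set A by apply: sub_finite_set fB.
have := cnt_UI fA (finite_set1 x).
have -> : A `&` [set x] = set0.
  apply/seteqP; split=> y //= [Ay Ey]; apply: nAx; by rewrite -Ey.
rewrite cnt0 cnt1 addn0 => h.
have : cnt (A `|` [set x]) <= cnt B.
  apply: cnt_sub => // y [/AB//|Ey]; by rewrite Ey.
by rewrite h addn1.
Qed.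


Lemma fin_ind T (P : set T -> Prop) : P set0 ->
  (forall A x, finite_set A -> P A -> P ([set x] `|` A)) ->
  forall A, finite_set A -> P A.
Proof.
move=> P0 PS A fA.
have [c Hc] : exists c, cnt A = c by eexists.
elim/ltn_ind: c A fA Hc => c IH A fA Hc.
have [->|nA] := pselect (A = set0); first by [].
have [x Ax] : exists x, A x.
  apply: contra_notP nA => h; apply/seteqP; split => y //= Ay; apply: h; by exists y.
have fA' : finite_set (A `\ x) by apply: finite_setD.
have -> : A = [set x] `|` (A `\ x).
  apply/seteqP; split=> y.
    by move=> Ay; case: (pselect (y = x)) => [->|h]; [left|right].
  by move=> [->//|[]].
apply: PS => //; apply: (IH (cnt (A `\ x))) => //.
have : cnt (A `\ x) < cnt A.
  apply: (cnt_proper (x:=x) fA) => //.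
  by move=> [] _ /(_ erefl).
by rewrite -Hc.
Qed.

Lemma fin_max W (lt : W -> W -> Prop) (A : set W) :
  (forall a b, lt a b \/ a = b \/ lt b a) ->
  (forall a b c, lt a b -> lt b c -> lt a c) ->
  finite_set A -> A !=set0 -> exists2 x, A x & forall y, A y -> y = x \/ lt y x.
Proof.
move=> tot tr fA; move: A fA; apply: fin_ind.
  by case=> x.
move=> A x fA IH _.
have [->|nA] := pselect (A = set0).
  exists x; first by left.
  by move=> y [->|//]; left.
have [y [Ay Hy]] : exists y, A y /\ forall z, A z -> z = y \/ lt z y.
  have : A !=set0 by apply: contra_notP nA => h; apply/seteqP; split => z //= Az; apply: h; by exists z.
  by move/IH => [y Ay Hy]; exists y.
case: (tot x y) => [xy|[xy|yx]].
- exists y; first by right.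
  by move=> z [->|/Hy]; [right|].
- exists y; first by right.
  by move=> z [->|/Hy]; [left|].
- exists x; first by left.
  move=> z [->|/Hy [->|zy]]; [left|right|right] => //.
  exact: tr zy yx.
Qed.

Lemma fin_bound (A : set nat) : finite_set A -> exists K, forall x, A x -> x < K.
Proof.
move: A; apply: fin_ind; first by exists 0.
move=> A x _ [K HK]; exists (maxn K x.+1) => y [->|/HK]; lia.
Qed.


Section Scheme.
Variables (W : Type) (lt : W -> W -> Prop) (m n r : nat -> nat) (Fam : set (set W)).
Hypothesis Hirr : forall a, ~ lt a a.
Hypothesis Htr : forall a b c, lt a b -> lt b c -> lt a c.
Hypothesis Htot : forall a b, lt a b \/ a = b \/ lt b a.
Hypothesis Hinf : ~ finite_set [set: W].
Hypothesis Htype : is_type m n r.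
Hypothesis Hsch : construction_scheme lt m n r Fam.

Local Notation Fk := (Fk m Fam).
Local Notation dec := (decomposition lt m n r Fam).
Local Notation rho := (rho_le m Fam).

Lemma type_k k : [/\ 2 <= n k.+1, r k.+1 < m k & m k.+1 = r k.+1 + (m k - r k.+1) * n k.+1].
Proof. by case: Htype => _ /(_ k). Qed.

Lemma m_lt k : m k < m k.+1.
Proof.
case: (type_k k) => h1 h2 h3; rewrite h3.
have : (m k - r k.+1) * 2 <= (m k - r k.+1) * n k.+1 by rewrite leq_mul2l h1 orbT.
lia.
Qed.

Lemma m_le j l : j <= l -> m j <= m l.
Proof.
elim: l => [|l IH]; first by rewrite leqn0 => /eqP ->.
rewrite leq_eqVlt => /orP [/eqP ->//|]; rewrite ltnS => /IH h.
exact: leq_trans h (ltnW (m_lt l)).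
Qed.

Lemma Fk_size k F : Fk k F -> finite_set F /\ cnt F = m k.
Proof. by case=> _ /has_sizeP. Qed.

Section Dec.
Variables (k : nat) (F : set W) (Fs : nat -> set W) (R : set W).
Hypothesis D : dec k F Fs R.

Lemma dec_Fs i : i < n k.+1 -> Fk k (Fs i).
Proof. by case: D => -[h _ _ _ _] _; apply: h. Qed.

Lemma dec_cover x : F x -> exists2 i, i < n k.+1 & Fs i x.
Proof.
case: D => -[_ -> _ _ _] _ [i Hi Fx]; exists i => //.
Qed.

Lemma dec_subF i : i < n k.+1 -> Fs i `<=` F.
Proof. case: D => -[_ -> _ _ _] _ Hi x Fx; by exists i. Qed.

Lemma dec_Rsub i : i < n k.+1 -> R `<=` Fs i.
Proof.
move=> Hi; case: D => -[_ _ HI _ _] _.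
have [j [Hj Hij]] : exists j, j < n k.+1 /\ i <> j.
  case: (type_k k) => h1 _ _.
  case: i Hi => [|i] Hi; [exists 1 | exists 0]; split => //; lia.
by rewrite -(HI i j Hi Hj Hij) => x [].
Qed.

Lemma dec_Rsize : finite_set R /\ cnt R = r k.+1.
Proof. by case: D => -[_ _ _ /has_sizeP h _] _. Qed.

Lemma dec_blk_ne i : i < n k.+1 -> exists y, Fs i y /\ ~ R y.
Proof.
move=> Hi; case: (pselect (exists y, Fs i y /\ ~ R y)) => // h; exfalso.
case: (Fk_size (dec_Fs Hi)) => fF cF.
case: dec_Rsize => fR cR.
have : cnt (Fs i) <= cnt R.
  apply: cnt_sub => // y Fy; apply: contra_notP h => Ry; by exists y.
rewrite cF cR; case: (type_k k) => _ h2 _; lia.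
Qed.

Lemma dec_blk1 i x y : i.+1 < n k.+1 -> Fs i x -> ~ R x -> Fs i.+1 y -> ~ R y -> lt x y.
Proof. by move=> Hi Fx Rx Fy Ry; case: D => _ /(_ i Hi); apply. Qed.

Lemma dec_blk i j x y : i < j -> j < n k.+1 -> Fs i x -> ~ R x -> Fs j y -> ~ R y -> lt x y.
Proof.
elim: j y => [|j IH] y Hij Hj Fx Rx Fy Ry; first by [].
move: Hij; rewrite ltnS leq_eqVlt => /orP [/eqP Eij|Hij].
  subst i; exact: (dec_blk1 Hj Fx Rx Fy Ry).
have [z [Fz Rz]] := dec_blk_ne (ltnW Hj).
apply: Htr (dec_blk1 Hj Fz Rz Fy Ry).
exact: IH (ltnW Hj) Fx Rx Fz Rz.
Qed.

Lemma dec_Rlt i x y : i < n k.+1 -> R x -> Fs i y -> ~ R y -> lt x y.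
Proof.
move=> Hi Rx Fy Ry.
have H0 : 0 < n k.+1 by lia.
case: D => -[_ _ _ _ /(_ H0) hR] _.
case: i Hi Fy Ry => [|i] Hi Fy Ry; first by apply: hR.
have [z [Fz Rz]] := dec_blk_ne H0.
apply: Htr (hR x z Rx (conj Fz Rz)) _.
exact: dec_blk Fz Rz Fy Ry.
Qed.

Definition Blk i := [set x | R x \/ exists t, t < i /\ Fs t x].

Lemma Blk_sub i : i <= n k.+1 -> Blk i `<=` F.
Proof.
move=> Hi x [Rx|[t [Ht Fx]]].
  have H0 : 0 < n k.+1 by case: (type_k k) => h _ _; lia.
  by apply: (dec_subF H0); apply: dec_Rsub.
by apply: (dec_subF (leq_trans Ht Hi)).
Qed.

Lemma Fin_F : finite_set F.
Proof.
have H0 : 0 < n k.+1 by case: (type_k k) => h _ _; lia.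
case: D => -[_ -> _ _ _] _.
apply: bigcup_finite => [|i Hi]; last first.
  by case: (Fk_size (dec_Fs Hi)).
exact: finite_II.
Qed.

Lemma Blk_cnt i : i <= n k.+1 -> cnt (Blk i) = r k.+1 + i * (m k - r k.+1).
Proof.
elim: i => [|i IH] Hi.
  have -> : Blk 0 = R.
    by apply/seteqP; split=> x; [move=> [//|[t [//]]]|left].
  by case: dec_Rsize => _ ->; rewrite mul0n addn0.
have Hi' : i < n k.+1 by [].
have E1 : Blk i.+1 = Blk i `|` Fs i.
  apply/seteqP; split=> x.
    move=> [Rx|[t [Ht Fx]]]; first by left; left.
    move: Ht; rewrite ltnS leq_eqVlt => /orP [/eqP Et|Ht].
      by right; rewrite -Et.
    by left; right; exists t.
  move=> [[Rx|[t [Ht Fx]]]|Fx]; first by left.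
    by right; exists t; split => //; apply: ltnW.
  by right; exists i.
have E2 : Blk i `&` Fs i = R.
  apply/seteqP; split=> x.
    move=> [[Rx|[t [Ht Fx]]] Fix] //.
    case: D => -[_ _ HI _ _] _.
    have htn : t < n k.+1 by apply: ltn_trans Ht Hi'.
    have hne : t <> i by move=> E; rewrite E ltnn in Ht.
    by rewrite -(HI t i htn Hi' hne).
  by move=> Rx; split; [left|apply: (dec_Rsub Hi')].
have fB : finite_set (Blk i) by apply: sub_finite_set (Blk_sub (ltnW Hi)) Fin_F.
have fFi : finite_set (Fs i) by case: (Fk_size (dec_Fs Hi')).
have := cnt_UI fB fFi; rewrite -E1 E2 IH ?(ltnW Hi) //.
case: dec_Rsize => _ ->; case: (Fk_size (dec_Fs Hi')) => _ ->.
case: (type_k k) => _ h2 _; nia.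
Qed.

Definition Lb a := [set x | F x /\ lt x a].

Lemma Lb_fin a : finite_set (Lb a).
Proof. by apply: sub_finite_set Fin_F => x []. Qed.

Lemma pos_blk i a : i < n k.+1 -> Fs i a -> ~ R a ->
  r k.+1 + i * (m k - r k.+1) <= cnt (Lb a) < r k.+1 + i.+1 * (m k - r k.+1).
Proof.
move=> Hi Fa Ra; apply/andP; split.
  rewrite -Blk_cnt ?(ltnW Hi) //; apply: cnt_sub; first exact: Lb_fin.
  move=> x Bx; split; first by apply: (Blk_sub (ltnW Hi)).
  case: Bx => [Rx|[t [Ht Fx]]]; first exact: dec_Rlt Hi Rx Fa Ra.
  case: (pselect (R x)) => Rx; first exact: dec_Rlt Hi Rx Fa Ra.
  exact: dec_blk Ht Hi Fx Rx Fa Ra.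
rewrite -Blk_cnt //; apply: (cnt_proper (x := a)).
- by apply: sub_finite_set (Blk_sub Hi) Fin_F.
- move=> x [Fx xa]; have [t Ht Fsx] := dec_cover Fx.
  case: (pselect (R x)) => Rx; first by left.
  right; exists t; split => //.
  rewrite ltnS leqNgt; apply/negP => Hti.
  exact: Hirr (Htr xa (dec_blk Hti Ht Fa Ra Fsx Rx)).
- by right; exists i.
- by move=> [_ /Hirr].
Qed.

Lemma pos_R a : R a -> cnt (Lb a) < r k.+1.
Proof.
move=> Ra; case: dec_Rsize => fR <-.
apply: (cnt_proper (x := a)) => //; last by move=> [_ /Hirr].
move=> x [Fx xa]; have [t Ht Fsx] := dec_cover Fx.
case: (pselect (R x)) => // Rx.
exfalso; exact: Hirr (Htr xa (dec_Rlt Ht Ra Fsx Rx)).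
Qed.

End Dec.

Lemma coh_down k E F a x : Fk k E -> Fk k F -> E a -> F a -> E x -> lt x a -> F x.
Proof.
move=> HE HF Ea Fa Ex xa; case: Hsch => _ _ Hc _.
have [[_ h] _] := Hc k E F HE HF.
by case: (h a x (conj Ea Fa) Ex xa).
Qed.

Lemma Lb_eq k F G a : Fk k F -> Fk k G -> F a -> G a ->
  Lb F a = Lb G a.
Proof.
move=> HF HG Fa Ga; apply/seteqP; split=> x [Fx xa]; split => //.
  exact: coh_down HF HG Fa Ga Fx xa.
exact: coh_down HG HF Ga Fa Fx xa.
Qed.

Lemma Xi_unique k F Fs R G Gs R' i p a : Fk k.+1 F -> dec k F Fs R ->
  i < n k.+1 -> Fs i a -> ~ R a -> Fk k.+1 G -> dec k G Gs R' ->
  p < n k.+1 -> Gs p a -> i = p.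
Proof.
move=> HF DF Hi Fa Ra HG DG Hp Ga.
have E := Lb_eq HF HG (dec_subF DF Hi Fa) (dec_subF DG Hp Ga).
have /andP [h1 h2] := pos_blk DF Hi Fa Ra.
case: (type_k k) => _ hr _.
case: (pselect (R' a)) => R'a.
  have := pos_R DG R'a; rewrite -E; lia.
have /andP [h3 h4] := pos_blk DG Hp Ga R'a.
rewrite -E in h3 h4.
case: (ltngtP i p) => // Hip.
  have : i.+1 * (m k - r k.+1) <= p * (m k - r k.+1) by rewrite leq_mul2r Hip orbT.
  lia.
have : p.+1 * (m k - r k.+1) <= i * (m k - r k.+1) by rewrite leq_mul2r Hip orbT.
lia.
Qed.

Lemma sch_dec k F : Fk k.+1 F -> exists Fs R, dec k F Fs R.
Proof. by case: Hsch => _ _ _; apply. Qed.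

Lemma Desc l H j x : Fk l H -> j < l -> H x ->
  exists Q Qs R i, [/\ Fk j.+1 Q, dec j Q Qs R, i < n j.+1, Qs i x & Q `<=` H].
Proof.
elim: l H => [|l IH] H HH Hj Hx; first by [].
have [Hs [R D]] := sch_dec HH.
have [t Ht Hsx] := dec_cover D Hx.
move: Hj; rewrite ltnS leq_eqVlt => /orP [/eqP Ejl|Hjl].
  by subst j; exists H, Hs, R, t; split.
have [Q [Qs [R2 [i [h1 h2 h3 h4 h5]]]]] := IH (Hs t) (dec_Fs D Ht) Hjl Hsx.
exists Q, Qs, R2, i; split => //.
by move=> y /h5 /(dec_subF D Ht).
Qed.

Lemma ex_out (E : set W) : finite_set E -> exists y, ~ E y.
Proof.
move=> fE; case: (pselect (exists y, ~ E y)) => // h; exfalso; apply: Hinf.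
apply: sub_finite_set fE => y _; apply: contra_notP h => h'; by exists y.
Qed.

Lemma lift1 j E : Fk j E ->
  exists Q Qs R i, [/\ Fk j.+1 Q, dec j Q Qs R, i < n j.+1 & E `<=` Qs i].
Proof.
move=> HE; have [fE cE] := Fk_size HE.
have [y Ey] := ex_out fE.
have fEy : finite_set (E `|` [set y]) by rewrite finite_setU; split => //; apply: finite_set1.
case: Hsch => Hfam Hcof _ _.
have [H [FH sH]] := Hcof _ fEy.
have [_ [l hl]] := Hfam H FH.
have HH : Fk l H by [].
have [fH cH] := Fk_size HH.
have Hjl : j < l.
  rewrite ltnNge; apply/negP => Hlj.
  have := cnt_UI fE (finite_set1 y).
  have -> : E `&` [set y] = set0.
    apply/seteqP; split=> z //= [Ez Eq]; apply: Ey; by rewrite -Eq.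
  rewrite cnt0 cnt1 addn0 cE => h.
  have := cnt_sub fH sH; rewrite h cH.
  have := m_le Hlj; lia.
have [e Ee He] := fin_max Htot Htr fE (proj1 (Hfam E (proj1 HE))).
have [Q [Qs [R [i [h1 h2 h3 h4 h5]]]]] := Desc HH Hjl (sH e (or_introl Ee)).
exists Q, Qs, R, i; split => // z Ez.
case: (He z Ez) => [->//|ze].
exact: coh_down HE (dec_Fs h2 h3) Ee h4 Ez ze.
Qed.

Lemma lift j k E : Fk j E -> j <= k -> exists F, Fk k F /\ E `<=` F.
Proof.
move=> HE; elim: k => [|k IH].
  by rewrite leqn0 => /eqP Ej; subst j; exists E; split.
rewrite leq_eqVlt => /orP [/eqP Ej|]; first by subst j; exists E; split.
rewrite ltnS => /IH [F [HF EF]].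
have [Q [Qs [R [i [h1 h2 h3 h4]]]]] := lift1 HF.
exists Q; split => // x /EF /h4 /(dec_subF h2 h3) //.
Qed.

Lemma rho_fk a b j : rho a b j -> exists F, Fk j F /\ F a /\ F b.
Proof.
move=> [j' [Hj' [E [HE [Ea Eb]]]]].
have [F [HF EF]] := lift HE Hj'.
by exists F; split => //; split; apply: EF.
Qed.

Lemma rho_of a b j F : Fk j F -> F a -> F b -> rho a b j.
Proof. by move=> HF Fa Fb; exists j; split => //; exists F. Qed.

Lemma rho_mono a b j k : rho a b j -> j <= k -> rho a b k.
Proof. by move=> [j' [Hj' h]] Hjk; exists j'; split => //; apply: leq_trans Hj' Hjk. Qed.

Lemma rho_sym a b j : rho a b j -> rho b a j.
Proof. by move=> [j' [Hj' [F [HF [Fa Fb]]]]]; exists j'; split => //; exists F. Qed.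

Lemma rho_tr a M b j : lt a M -> rho a M j -> rho M b j -> rho a b j.
Proof.
move=> aM /rho_fk [F [HF [Fa FM]]] /rho_fk [G [HG [GM Gb]]].
apply: (rho_of HG) => //.
exact: coh_down HF HG FM GM Fa aM.
Qed.

Lemma rho_ex a b : exists K, rho a b K.
Proof.
case: Hsch => Hfam Hcof _ _.
have [H [FH sH]] := Hcof [set a; b] (finite_set2 a b).
have [_ [l hl]] := Hfam H FH.
exists l; apply: (@rho_of _ _ l H) => //; apply: sH; [by left|by right].
Qed.

Lemma level a k : exists F, Fk k F /\ F a.
Proof.
case: Hsch => Hfam Hcof _ _.
have [H [FH sH]] := Hcof [set a] (finite_set1 a).
have [_ [l hl]] := Hfam H FH.
have HH : Fk l H by [].
have Ha : H a by apply: sH.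
case: (ltnP k l) => Hkl.
  have [Q [Qs [R [i [h1 h2 h3 h4 h5]]]]] := Desc HH Hkl Ha.
  exists (Qs i); split => //; first exact: (dec_Fs h2 h3).
have [F [HF sF]] := lift HH Hkl.
by exists F; split => //; apply: sF.
Qed.

Definition Nrm a j := [set x | lt x a /\ rho x a j].

Lemma Nrm_sub a j F : Fk j F -> F a -> Nrm a j `<=` [set x | F x /\ lt x a].
Proof.
move=> HF Fa x [xa /rho_fk [G [HG [Gx Ga]]]]; split => //.
exact: coh_down HG HF Ga Fa Gx xa.
Qed.

Lemma Nrm_fin a j : finite_set (Nrm a j).
Proof.
have [F [HF Fa]] := level a j.
apply: sub_finite_set (Nrm_sub HF Fa) _.
by apply: sub_finite_set (proj1 (Fk_size HF)) => x [].
Qed.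

Lemma norm_cnt a j c : norm_is lt m Fam a j c -> c = cnt (Nrm a j).
Proof. by move/has_sizeP => [_ <-]. Qed.

Lemma norm_ex a j : exists c, norm_is lt m Fam a j c /\ c < m j.
Proof.
exists (cnt (Nrm a j)); split; first by apply/has_sizeP; split => //; exact: Nrm_fin.
have [F [HF Fa]] := level a j.
have [fF cF] := Fk_size HF.
rewrite -cF; apply: (cnt_proper (x := a)) => //.
  by move=> x /(Nrm_sub HF Fa) [].
by move=> [/Hirr].
Qed.

Lemma norm_lt a b j : lt a b -> rho a b j -> cnt (Nrm a j) < cnt (Nrm b j).
Proof.
move=> ab hab; apply: (cnt_proper (x := a)).
- exact: Nrm_fin.
- move=> x [xa hxa]; split; first exact: Htr xa ab.
  exact: rho_tr xa hxa hab.
- by split.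
- by move=> [/Hirr].
Qed.

Lemma Xi_same a b j i i' : rho a b j -> Xi_is lt m n r Fam a j i ->
  Xi_is lt m n r Fam b j i' -> i = i'.
Proof.
move=> /rho_fk [E [HE [Ea Eb]]].
have [Q [Qs [R [p [h1 h2 h3 h4]]]]] := lift1 HE.
move=> [F [Fs [R1 [[HF Fa D1 Hi] [Fsa Ra]]]]].
move=> [G [Gs [R2 [[HG Gb D2 Hi'] [Gsb Rb]]]]].
rewrite (Xi_unique HF D1 Hi Fsa Ra h1 h2 h3 (h4 a Ea)).
by rewrite (Xi_unique HG D2 Hi' Gsb Rb h1 h2 h3 (h4 b Eb)).
Qed.

Lemma A_disj a b j (s : {ffun 'I_(n j.+1) -> 'I_(m j)}) : a <> b -> rho a b j ->
  A_F lt r Fam a (existT _ j s) -> A_F lt r Fam b (existT _ j s) -> False.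
Proof.
move=> nab hab [i [Hi [Xa Na]]] [i' [Hi' [Xb Nb]]].
have Eii := Xi_same hab Xa Xb; subst i'.
have Eo : Ordinal Hi = Ordinal Hi' by apply: val_inj.
rewrite Eo in Na.
have c1 := norm_cnt Na; have c2 := norm_cnt Nb.
case: (Htot a b) => [ab|[//|ba]].
  have := norm_lt ab hab; rewrite -c1 -c2 ltnn.
  done.
have := norm_lt ba (rho_sym hab); rewrite -c1 -c2 ltnn.
done.
Qed.

End Scheme.


Lemma countableU2 T (A B : set T) : countable A -> countable B -> countable (A `|` B).
Proof.
move=> cA cB.
have -> : A `|` B = \bigcup_(b in [set: bool]) (if b then A else B).
  apply/seteqP; split=> x.
    by move=> [Ax|Bx]; [exists true|exists false].
  by move=> [[] _ h]; [left|right].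
apply: bigcup_countable => //; by case.
Qed.

Lemma Gam W (lt : W -> W -> Prop) (S : set W) :
  (forall a b, lt a b \/ a = b \/ lt b a) ->
  (forall a, countable [set x | lt x a]) -> ~ countable [set: W] ->
  countable S -> exists g, forall a, S a -> lt a g.
Proof.
move=> tot cd unc cS.
case: (pselect (exists g, forall a, S a -> lt a g)) => // h; exfalso; apply: unc.
have : [set: W] `<=` \bigcup_(a in S) ([set x | lt x a] `|` [set a]).
  move=> g _; apply: contra_notP h => h1; exists g => a Sa.
  case: (tot a g) => [//|[E|ga]]; exfalso; apply: h1; exists a => //.
    by right.
  by left.
move/subset_card_le => h2; apply: sub_countable h2 _.
apply: bigcup_countable => // a _; apply: countableU2 => //; exact: countable1.
Qed.

Section Fam.
Variables (W : Type) (lt : W -> W -> Prop) (m n r : nat -> nat) (Fam : set (set W)).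
Hypothesis Hirr : forall a, ~ lt a a.
Hypothesis Htr : forall a b c, lt a b -> lt b c -> lt a c.
Hypothesis Htot : forall a b, lt a b \/ a = b \/ lt b a.
Hypothesis Hinf : ~ finite_set [set: W].
Hypothesis Hgood : good_type m n r.
Hypothesis Hsch : construction_scheme lt m n r Fam.

Let Htype : is_type m n r := proj1 Hgood.
Local Notation rho := (rho_le m Fam).
Local Notation AF := (@A_F W lt m n r Fam).

Definition Lev K := [set p : Nset m n | projT1 p < K].

Lemma Lev_fin K : finite_set (Lev K).
Proof.
have : Lev K `<=` \bigcup_(j in `I_K) ((fun s => existT (fun j => {ffun 'I_(n j.+1) -> 'I_(m j)}) j s) @` [set: {ffun 'I_(n j.+1) -> 'I_(m j)}]).
  by case=> j s /= HK; exists j => //; exists s.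
move/sub_finite_set; apply; apply: bigcup_finite; first exact: finite_II.
move=> j _; apply: finite_image; exact: finite_finset.
Qed.

Definition Bad a b := [set p : Nset m n | ~ rho a b (projT1 p)].

Lemma Bad_fin a b : finite_set (Bad a b).
Proof.
have [K hK] := rho_ex Hsch a b.
apply: sub_finite_set (Lev_fin K) => p hp; rewrite /Lev /=.
rewrite ltnNge; apply/negP => h; apply: hp; exact: rho_mono hK h.
Qed.

Lemma AF_inter a b : a <> b -> AF a `&` AF b `<=` Bad a b.
Proof.
move=> nab [j s] [Ha Hb] /= hab.
exact: (A_disj Hirr Htr Htot Hinf Htype Hsch nab hab Ha Hb).
Qed.

Lemma AF_inf a : ~ finite_set (AF a).
Proof.
move=> fA.
have [K HK] := fin_bound (finite_image (@projT1 _ _) fA).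
case: Hgood => _ /(_ 0 K.+1) [k [Hk Hk1 rk]].
case: k Hk Hk1 rk => [//|j] Hk _ rk.
have [F [HF Fa]] := level Htr Htot Hinf Htype Hsch a j.+1.
have [Fs [R D]] := sch_dec Hsch HF.
have R0 : R = set0.
  case: (dec_Rsize D) => fR cR; apply: cnt_eq0 => //; by rewrite cR rk.
have [i Hi Fsa] := dec_cover D Fa.
have [c [Nc hc]] := norm_ex Hirr Htr Htot Hinf Htype Hsch a j.
pose s : {ffun 'I_(n j.+1) -> 'I_(m j)} := [ffun _ => Ordinal hc].
have : AF a (existT _ j s).
  exists i, Hi; split.
    exists F, Fs, R; split; first by split.
    by split => //; rewrite R0.
  by rewrite /s ffunE.
move=> h; have := HK j (ex_intro2 _ _ _ h erefl); lia.
Qed.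

End Fam.


Section Main.
Variables (W : Type) (lt : W -> W -> Prop) (m n r : nat -> nat) (Fam : set (set W)).
Hypothesis Hirr : forall a, ~ lt a a.
Hypothesis Htr : forall a b c, lt a b -> lt b c -> lt a c.
Hypothesis Htot : forall a b, lt a b \/ a = b \/ lt b a.
Hypothesis Hinf : ~ finite_set [set: W].
Hypothesis Hgood : good_type m n r.
Hypothesis Hsch : construction_scheme lt m n r Fam.
Variables (X : Type) (le : X -> X -> Prop) (psi : X -> W) (g : X -> W).
Hypothesis Hpo : partial_order le.
Hypothesis Hpsi : injective psi.
Hypothesis Hg : forall x y, le y x -> lt (psi y) (g x).

Let Htype : is_type m n r := proj1 Hgood.
Local Notation rho := (rho_le m Fam).
Local Notation AF := (@A_F W lt m n r Fam).

Lemma finU2 T (A B : set T) : finite_set A -> finite_set B -> finite_set (A `|` B).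
Proof. by move=> fA fB; rewrite finite_setU. Qed.

Local Notation BD a b := (Bad (m:=m) (n:=n) Fam a b).
Let bf a b : finite_set (BD a b) := Bad_fin Hsch a b.
Let rtr a M b j : lt a M -> rho a M j -> rho M b j -> rho a b j := @rho_tr _ _ _ _ _ _ Htr Htot Hinf Htype Hsch a M b j.

Definition AA x := AF (psi x).
Definition TT x : set (Nset m n) :=
  AA x `|` [set p | exists2 u, le u x & AA u p /\ rho (psi u) (g x) (projT1 p)].

Lemma le_refl x : le x x. Proof. by case: Hpo. Qed.
Lemma le_anti x y : le x y -> le y x -> x = y. Proof. by case: Hpo => _ h _; apply: h. Qed.
Lemma le_trans x y z : le x y -> le y z -> le x z. Proof. by case: Hpo => _ _ h; apply: h. Qed.

Lemma disj_via a M b p : a <> b -> lt a M -> AF a p -> AF b p ->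
  rho a M (projT1 p) -> ~ rho M b (projT1 p).
Proof.
move=> nab aM Ha Hb h1 h2.
have h := rtr aM h1 h2.
by case: p Ha Hb h1 h2 h => j s Ha Hb _ _ h; apply: (A_disj Hirr Htr Htot Hinf Htype Hsch nab h Ha Hb).
Qed.

Lemma fin_AT x y : ~ le y x -> finite_set (AA y `&` TT x).
Proof.
move=> nyx.
have nxy : x <> y by move=> E; apply: nyx; rewrite E; apply: le_refl.
apply: (sub_finite_set _ (finU2 (bf (psi y) (psi x)) (bf (g x) (psi y)))).
move=> p [Ay [Ax|[u ux [Au hu]]]].
  left; apply: (AF_inter Hirr Htr Htot Hinf Hgood Hsch) => //.
  by move=> E; apply: nxy; apply: Hpsi.
right => h; apply: (disj_via _ (Hg ux) Au Ay hu h).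
by move=> E; apply: nyx; rewrite -(Hpsi E).
Qed.

Lemma fin_TD z x : le z x -> finite_set (TT z `\` TT x).
Proof.
move=> zx.
apply: (sub_finite_set _ (finU2 (bf (psi z) (g x)) (bf (g z) (g x)))).
move=> p [[Az|[u uz [Au hu]]] nT].
  by left => h; apply: nT; right; exists z.
right => h; apply: nT; right; exists u; first exact: le_trans uz zx.
split => //; exact: rtr (Hg uz) hu h.
Qed.

Lemma AT_sub x : AA x `<=` TT x. Proof. by move=> p h; left. Qed.


Lemma fin_cond (P : Prop) T (A : set T) : (P -> finite_set A) -> finite_set [set p | P /\ A p].
Proof.
move=> h; case: (pselect P) => hP.
  by apply: sub_finite_set (h hP) => p [].
by apply: sub_finite_set (finite_set0 T) => p [].
Qed.

Lemma fin_inter x y z : Defs.is_inf le x y z -> finite_set ((TT x `&` TT y) `\` TT z).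
Proof.
move=> [zx zy hz].
pose C1 := [set p | ~ le x y /\ (AA x `&` TT y) p].
pose C2 := [set p | ~ le y x /\ (AA y `&` TT x) p].
have f1 : finite_set C1 by apply: fin_cond; apply: fin_AT.
have f2 : finite_set C2 by apply: fin_cond; apply: fin_AT.
apply: (sub_finite_set _ (finU2 (finU2 f1 f2) (finU2 (bf (g x) (g z)) (bf (g x) (g y))))).
move=> p [[Tx Ty] nTz].
case: Tx => [Ax|[u ux [Au hu]]].
  left; left; split => //.
  move=> xy; apply: nTz; have -> : z = x by apply: le_anti zx (hz x (le_refl x) xy).
  by left.
case: Ty => [Ay|[v vy [Av hv]]].
  left; right; split; last by split => //; right; exists u.
  move=> yx; apply: nTz; have -> : z = y by apply: le_anti zy (hz y yx (le_refl y)).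
  by left.
case: (pselect (u = v)) => [Euv|nuv].
  subst v; right; left => h; apply: nTz; right; exists u; first exact: hz.
  split => //; exact: rtr (Hg ux) hu h.
right; right => h.
have h1 : rho (psi v) (g x) (projT1 p) by apply: rtr (Hg vy) hv (rho_sym h).
apply: (disj_via _ (Hg ux) Au Av hu (rho_sym h1)).
by move=> E; apply: nuv; apply: Hpsi.
Qed.

Lemma fin_incomp x y : incompatible le x y -> finite_set (TT x `&` TT y).
Proof.
move=> hin.
have nxy : ~ le x y by move=> h; apply: hin; exists x; split => //; apply: le_refl.
have nyx : ~ le y x by move=> h; apply: hin; exists y; split => //; apply: le_refl.
apply: (sub_finite_set _ (finU2 (finU2 (fin_AT nxy) (fin_AT nyx)) (bf (g x) (g y)))).
move=> p [Tx Ty].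
case: Tx => [Ax|[u ux [Au hu]]]; first by left; left.
case: Ty => [Ay|[v vy [Av hv]]]; first by left; right; split => //; right; exists u.
right => h.
have nuv : u <> v by move=> E; subst v; apply: hin; exists u.
have h1 : rho (psi v) (g x) (projT1 p) by apply: rtr (Hg vy) hv (rho_sym h).
apply: (disj_via _ (Hg ux) Au Av hu (rho_sym h1)).
by move=> E; apply: nuv; apply: Hpsi.
Qed.

Lemma fin_succ1 x : successor_like le x ->
  finite_set ((TT x `\` \bigcup_(z in Defs.predX le x) TT z) `\` AA x).
Proof.
move=> [fP hP].
apply: (sub_finite_set _ (bigcup_finite fP (fun z _ => bf (g x) (g z)))).
move=> p [[[Ax|[u ux [Au hu]]] nU] nA]; first by [].
have nux : u <> x by move=> E; apply: nA; rewrite -E.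
have [z Pz uz] := hP u (conj ux nux).
exists z => // h; apply: nU; exists z => //; right; exists u => //.
split => //; exact: rtr (Hg ux) hu h.
Qed.

Lemma fin_succ2 x : successor_like le x ->
  finite_set (AA x `\` (TT x `\` \bigcup_(z in Defs.predX le x) TT z)).
Proof.
move=> [fP hP].
have hz : forall z, Defs.predX le x z -> finite_set (AA x `&` TT z).
  move=> z [[zx nzx] _]; apply: fin_AT => xz; apply: nzx; exact: le_anti.
apply: (sub_finite_set _ (bigcup_finite fP hz)).
move=> p [Ax h]; case: (pselect ((\bigcup_(z in Defs.predX le x) TT z) p)) => [[z Pz Tz]|nU].
  by exists z.
by exfalso; apply: h; split => //; left.
Qed.


Lemma main_rep : ad_representation le TT AA.
Proof.
have Ainf : forall x, ~ finite_set (AA x) by move=> x; exact: (AF_inf Hirr Htr Htot Hinf Hgood Hsch).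
have AD : forall x y, x <> y -> finite_set (AA x `&` AA y).
  move=> x y nxy; apply: sub_finite_set (bf (psi x) (psi y)).
  apply: (AF_inter Hirr Htr Htot Hinf Hgood Hsch) => E; apply: nxy; exact: Hpsi.
split; split.
- move=> x; split => //; move=> h; apply: (Ainf x); exact: sub_finite_set (@AT_sub x) h.
- move=> x y E; apply: contrapT => nxy; apply: (Ainf x).
  have := AD x y nxy; by rewrite E setIid.
- exact: AD.
- by move=> x; apply: AT_sub.
- move=> x y nyx; rewrite /subAE.
  apply: sub_finite_set (fin_AT nyx) => p [Ay h]; split => //.
  apply: contrapT => nTx; apply: h; split => //; by left.
- move=> x y z hi; split.
    exact: fin_inter hi.
  case: hi => zx zy _.
  apply: sub_finite_set (finU2 (fin_TD zx) (fin_TD zy)) => p [Tz h].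
  case: (pselect (TT x p)) => Tx; last by left.
  case: (pselect (TT y p)) => Ty; last by right.
  by exfalso; apply: h.
- move=> x hs; split; [exact: fin_succ1|exact: fin_succ2].
- move=> x y hin; split.
    apply: sub_finite_set (fin_incomp hin) => p [] //.
  by apply: sub_finite_set (finite_set0 _) => p [].
Qed.

End Main.


Theorem mainTheorem12
  (W : Type) (lt : W -> W -> Prop) (m n r : nat -> nat) (Fam : set (set W))
  (X : Type) (le : X -> X -> Prop) :
  omega1_order lt ->
  good_type m n r ->
  @construction_scheme W lt m n r Fam ->
  omega1_like le W ->
  exists (psi : X -> W) (T : X -> set (Nset m n)),
    bijective psi /\
    ad_representation le T (fun x => @A_F W lt m n r Fam (psi x)).
Proof.
move=> [[Hirr Htr Htot _] [Hcd Hunc]] Hgood Hsch [Hpo _ [f Hf] HcX].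
have Hinf : ~ finite_set [set: W] by move=> h; apply: Hunc; apply: finite_set_countable.
have Hinj : injective f := bij_inj Hf.
have Hgex : forall x, exists gx, forall y, le y x -> lt (f y) gx.
  move=> x.
  have cD : countable [set y | le y x].
    apply: sub_countable (subset_card_le _) (countableU2 (HcX x) (countable1 x)).
    move=> y hy; case: (pselect (y = x)) => [->|nyx]; [by right|by left].
  have [gx hg] := Gam (S := f @` [set y | le y x]) Htot Hcd Hunc
     (sub_countable (card_image_le f _) cD).
  by exists gx => y hy; apply: hg; exists y.
have [g Hg] := choice Hgex.
exists f, (TT lt r Fam le f g); split => //.
exact: (main_rep Hirr Htr Htot Hinf Hgood Hsch Hpo Hinj Hg).
Qed.
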